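(* Let $X$ be a compact metric space and $f\colon X\to X$ an expansive homeomorphism with the shadowing property. Then $f$ has the L-shadowing property.
   Context: $f$ is expansive if there is $c>0$ such that for all $x\neq y$ there is $k\in\mathbb{Z}$ with $d(f^k(x),f^k(y))>c$. A $\delta$-pseudo orbit is $(x_k)_{k\in\mathbb{Z}}$ with $d(f(x_k),x_{k+1})<\delta$ for all $k$; a two-sided limit pseudo orbit satisfies $d(f(x_k),x_{k+1})\to0$ as $|k|\to\infty$. $z$ $\varepsilon$-shadows $(x_k)$ if $d(f^k(z),x_k)<\varepsilon$ for all $k$, and two-sided limit shadows it if $d(f^k(z),x_k)\to0$ as $|k|\to\infty$. $f$ has the shadowing property if for every $\varepsilon>0$ there is $\delta>0$ such that every $\delta$-pseudo orbit is $\varepsilon$-shadowed. $f$ has the L-shadowing property if for every $\varepsilon>0$ there is $\delta>0$ such that every $\delta$-pseudo orbit that is also a two-sided limit pseudo orbit is both $\varepsilon$-shadowed and two-sided limit shadowed by one and the same point. *)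

(* Defs.v *)
From Stdlib Require Import Reals ZArith List.
Open Scope R_scope.

Record metric_space (X : Type) (d : X -> X -> R) : Prop := {
  ms_nonneg : forall x y, 0 <= d x y;
  ms_sep    : forall x y, d x y = 0 <-> x = y;
  ms_sym    : forall x y, d x y = d y x;
  ms_tri    : forall x y z, d x z <= d x y + d y z
}.

Definition m_open {X : Type} (d : X -> X -> R) (U : X -> Prop) : Prop :=
  forall x, U x -> exists r, 0 < r /\ forall y, d x y < r -> U y.

Definition m_compact {X : Type} (d : X -> X -> R) : Prop :=
  forall (I : Type) (U : I -> X -> Prop),
    (forall i, m_open d (U i)) ->
    (forall x, exists i, U i x) ->
    exists l : list I, forall x, exists i, In i l /\ U i x.

Definition m_continuous {X : Type} (d : X -> X -> R) (f : X -> X) : Prop :=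
  forall x eps, 0 < eps -> exists del, 0 < del /\
    forall y, d x y < del -> d (f x) (f y) < eps.

Definition homeomorphism_with_inverse {X : Type} (d : X -> X -> R) (f g : X -> X) : Prop :=
  (forall x, g (f x) = x) /\ (forall x, f (g x) = x) /\
  m_continuous d f /\ m_continuous d g.

Definition iterZ {X : Type} (f g : X -> X) (k : Z) (x : X) : X :=
  match k with
  | Z0 => x
  | Zpos p => Nat.iter (Pos.to_nat p) f x
  | Zneg p => Nat.iter (Pos.to_nat p) g x
  end.

Section Dyn.
Context {X : Type} (d : X -> X -> R) (f g : X -> X).
Local Notation fk k := (iterZ f g k).

Definition expansive : Prop :=
  exists c, 0 < c /\ forall x y, x <> y -> exists k : Z, d (fk k x) (fk k y) > c.

Definition pseudo_orbit (delta : R) (xs : Z -> X) : Prop :=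
  forall k : Z, d (f (xs k)) (xs (k + 1)%Z) < delta.

Definition two_sided_limit_pseudo_orbit (xs : Z -> X) : Prop :=
  forall eps, 0 < eps -> exists N : Z, forall k : Z,
    (N <= Z.abs k)%Z -> d (f (xs k)) (xs (k + 1)%Z) < eps.

Definition eps_shadows (eps : R) (z : X) (xs : Z -> X) : Prop :=
  forall k : Z, d (fk k z) (xs k) < eps.

Definition limit_shadows (z : X) (xs : Z -> X) : Prop :=
  forall eps, 0 < eps -> exists N : Z, forall k : Z,
    (N <= Z.abs k)%Z -> d (fk k z) (xs k) < eps.

Definition shadowing_property : Prop :=
  forall eps, 0 < eps -> exists delta, 0 < delta /\
    forall xs, pseudo_orbit delta xs -> exists z, eps_shadows eps z xs.

Definition L_shadowing_property : Prop :=
  forall eps, 0 < eps -> exists delta, 0 < delta /\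
    forall xs, pseudo_orbit delta xs -> two_sided_limit_pseudo_orbit xs ->
      exists z, eps_shadows eps z xs /\ limit_shadows z xs.
End Dyn.

(* Main.v *)
Require Import Defs.
From Stdlib Require Import Reals ZArith List.
From Stdlib Require Import Lra Lia Classical.
Open Scope R_scope.

Lemma fk_S {X : Type} (f g : X -> X) :
  (forall x, g (f x) = x) -> (forall x, f (g x) = x) ->
  forall k x, f (iterZ f g k x) = iterZ f g (k + 1) x.
Proof.
  intros Hgf Hfg k x. destruct k as [|p|p].
  - reflexivity.
  - simpl. rewrite Pos2Nat.inj_add. rewrite Nat.add_1_r. reflexivity.
  - destruct (Pos.succ_pred_or p) as [->|<-].
    + simpl. apply Hfg.
    + rewrite <- Pos.add_1_r.
      replace (Z.neg (Pos.pred p + 1) + 1)%Z with (Z.neg (Pos.pred p)) by lia.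
      unfold iterZ. rewrite Pos2Nat.inj_add, Nat.add_1_r. simpl. apply Hfg.
Qed.

Lemma fk_succ {X : Type} (f g : X -> X) :
  (forall x, g (f x) = x) -> (forall x, f (g x) = x) ->
  forall k x, iterZ f g (Z.succ k) x = f (iterZ f g k x).
Proof. intros. rewrite (fk_S f g H H0). reflexivity. Qed.

Lemma fk_pred {X : Type} (f g : X -> X) :
  (forall x, g (f x) = x) -> (forall x, f (g x) = x) ->
  forall k x, iterZ f g (Z.pred k) x = g (iterZ f g k x).
Proof.
  intros Hgf Hfg k x.
  replace k with (Z.pred k + 1)%Z at 2 by lia.
  rewrite <- (fk_S f g Hgf Hfg). rewrite Hgf. reflexivity.
Qed.

Lemma fk_add {X : Type} (f g : X -> X) :
  (forall x, g (f x) = x) -> (forall x, f (g x) = x) ->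
  forall i j x, iterZ f g i (iterZ f g j x) = iterZ f g (i + j) x.
Proof.
  intros Hgf Hfg i j x. induction i as [|i IH|i IH] using Z.peano_ind.
  - reflexivity.
  - rewrite (fk_succ f g Hgf Hfg), IH, <- (fk_succ f g Hgf Hfg).
    f_equal. lia.
  - rewrite (fk_pred f g Hgf Hfg), IH, <- (fk_pred f g Hgf Hfg).
    f_equal. lia.
Qed.

Lemma cont_comp {X : Type} (d : X -> X -> R) (h k : X -> X) :
  m_continuous d h -> m_continuous d k -> m_continuous d (fun x => h (k x)).
Proof.
  intros Hh Hk x eps Heps.
  destruct (Hh (k x) eps Heps) as [d1 [Hd1 H1]].
  destruct (Hk x d1 Hd1) as [d2 [Hd2 H2]].
  exists d2. split; auto.
Qed.

Lemma fk_cont {X : Type} (d : X -> X -> R) (f g : X -> X) :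
  homeomorphism_with_inverse d f g -> forall k, m_continuous d (iterZ f g k).
Proof.
  intros [Hgf [Hfg [Hf Hg]]] k.
  induction k as [|k IH|k IH] using Z.peano_ind.
  - intros x eps Heps. exists eps. split; auto.
  - intros x eps Heps. rewrite (fk_succ f g Hgf Hfg).
    destruct (cont_comp d f (iterZ f g k) Hf IH x eps Heps) as [del [Hd H]].
    exists del. split; auto. intros y Hy. rewrite (fk_succ f g Hgf Hfg). auto.
  - intros x eps Heps. rewrite (fk_pred f g Hgf Hfg).
    destruct (cont_comp d g (iterZ f g k) Hg IH x eps Heps) as [del [Hd H]].
    exists del. split; auto. intros y Hy. rewrite (fk_pred f g Hgf Hfg). auto.
Qed.

Lemma dxx {X : Type} (d : X -> X -> R) : metric_space X d -> forall x, d x x = 0.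
Proof. intros Hm x. apply (ms_sep _ _ Hm). reflexivity. Qed.

Lemma CP (X : Type) (d : X -> X -> R) : metric_space X d -> m_compact d ->
  forall (Q : nat -> nat -> X -> Prop),
  (forall n n' m x, (n <= n')%nat -> Q n' m x -> Q n m x) ->
  (forall n, exists m x, (n <= m)%nat /\ Q n m x) ->
  exists a, forall r, 0 < r -> forall n, exists m x, (n <= m)%nat /\ Q n m x /\ d a x < r.
Proof.
  intros Hm Hc Q Hmono Hinf.
  apply NNPP; intro Hno.
  assert (H: forall a, exists n r, 0 < r /\ forall m x, (n<=m)%nat -> Q n m x -> r <= d a x).
  { intro a. apply NNPP; intro Hna. apply Hno. exists a. intros r Hr n.
    apply NNPP; intro Hn. apply Hna. exists n, r. split; auto.
    intros m x Hnm HQ. apply Rnot_lt_le. intro Hlt. apply Hn. exists m, x. auto. }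
  destruct (Hc nat (fun n y => exists r, 0 < r /\ forall m x, (n<=m)%nat -> Q n m x -> r <= d y x))
    as [l Hl].
  - intros n y [r [Hr Hy]]. exists (r/2). split; [lra|]. intros y' Hyy'.
    exists (r/2). split; [lra|]. intros m x Hnm HQ. specialize (Hy m x Hnm HQ).
    pose proof (ms_tri _ _ Hm y y' x). lra.
  - intro y. destruct (H y) as [n [r Hr]]. exists n, r. exact Hr.
  - destruct (Hinf (list_max l)) as [m [x [HNm HQ]]].
    destruct (Hl x) as [i [Hi [r [Hr Hx]]]].
    assert (Hi' : (i <= list_max l)%nat).
    { pose proof (proj1 (list_max_le l (list_max l)) (le_n _)) as HF.
      rewrite Forall_forall in HF. auto. }
    specialize (Hx m x (Nat.le_trans _ _ _ Hi' HNm) (Hmono _ _ _ _ Hi' HQ)).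
    rewrite (dxx d Hm) in Hx. lra.
Qed.

Lemma small_inv : forall r, 0 < r -> exists n, forall n', (n <= n')%nat -> / (INR n' + 1) < r.
Proof.
  intros r Hr. destruct (archimed_cor1 r Hr) as [N [HN HN0]].
  exists N. intros n' Hn'.
  assert (0 < INR N) by (apply lt_0_INR; lia).
  apply le_INR in Hn'.
  apply Rle_lt_trans with (/ INR N); auto.
  apply Rinv_le_contravar; lra.
Qed.

Lemma UE (X : Type) (d : X -> X -> R) (f g : X -> X) (c : R) :
  metric_space X d -> m_compact d -> homeomorphism_with_inverse d f g ->
  (forall x y, x <> y -> exists k : Z, d (iterZ f g k x) (iterZ f g k y) > c) ->
  forall eta, 0 < eta -> exists M : nat, forall a b,
    (forall i, (Z.abs i <= Z.of_nat M)%Z -> d (iterZ f g i a) (iterZ f g i b) <= c) ->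
    d a b < eta.
Proof.
  intros Hm Hc Hh Hexp eta Heta. apply NNPP; intro Hno.
  assert (HR: forall M, exists a b, (forall i, (Z.abs i <= Z.of_nat M)%Z ->
     d (iterZ f g i a) (iterZ f g i b) <= c) /\ eta <= d a b).
  { intro M. apply NNPP; intro H1. apply Hno. exists M. intros a b Hab.
    apply Rnot_le_lt. intro H2. apply H1. exists a, b. auto. }
  set (R0 := fun (M : nat) a b => (forall i, (Z.abs i <= Z.of_nat M)%Z ->
     d (iterZ f g i a) (iterZ f g i b) <= c) /\ eta <= d a b).
  destruct (CP X d Hm Hc (fun n m x => exists y, R0 m x y)) as [a Ha].
  - intros; assumption.
  - intro n. destruct (HR n) as [a [b Hab]]. exists n, a. split; [lia|]. exists b. exact Hab.
  - destruct (CP X d Hm Hc (fun n m y => exists x, R0 m x y /\ d a x < / (INR n + 1)))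
      as [b Hb].
    + intros n n' m y Hn [x [HR' Hx]]. exists x. split; auto.
      eapply Rlt_le_trans; [exact Hx|]. apply Rinv_le_contravar.
      * pose proof (pos_INR n). lra.
      * apply le_INR in Hn. lra.
    + intro n. assert (Hp : 0 < / (INR n + 1)).
      { apply Rinv_0_lt_compat. pose proof (pos_INR n). lra. }
      destruct (Ha _ Hp n) as [m [x [Hnm [[y Hy] Hax]]]].
      exists m, y. split; auto. exists x. auto.
    + assert (Hab : a <> b).
      { intro E. subst b. destruct (small_inv (eta/2) ltac:(lra)) as [n0 Hn0].
        destruct (Hb (eta/2) ltac:(lra) n0) as [m [y [_ [[x [[_ Hxy] Hax]] Hby]]]].
        specialize (Hn0 n0 (le_n _)).
        pose proof (ms_tri _ _ Hm x a y). pose proof (ms_sym _ _ Hm x a). lra. }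
      destruct (Hexp a b Hab) as [k Hk].
      set (gam := (d (iterZ f g k a) (iterZ f g k b) - c) / 2).
      assert (Hgam : 0 < gam) by (unfold gam; lra).
      destruct (fk_cont d f g Hh k a gam Hgam) as [ra [Hra Hca]].
      destruct (fk_cont d f g Hh k b gam Hgam) as [rb [Hrb Hcb]].
      set (rho := Rmin ra rb).
      assert (Hrho : 0 < rho) by (unfold rho; apply Rmin_pos; auto).
      destruct (small_inv rho Hrho) as [n1 Hn1].
      set (n := Nat.max n1 (Z.to_nat (Z.abs k))).
      destruct (Hb rho Hrho n) as [m [y [Hnm [[x [[HRxy _] Hax]] Hby]]]].
      assert (Hax' : d a x < ra).
      { pose proof (Hn1 n (Nat.le_max_l _ _)). pose proof (Rmin_l ra rb). unfold rho in *. lra. }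
      assert (Hby' : d b y < rb).
      { pose proof (Rmin_r ra rb). unfold rho in *. lra. }
      assert (Hk' : (Z.abs k <= Z.of_nat m)%Z).
      { pose proof (Nat.le_max_r n1 (Z.to_nat (Z.abs k))). fold n in H. lia. }
      specialize (HRxy k Hk'). specialize (Hca x Hax'). specialize (Hcb y Hby').
      pose proof (ms_tri _ _ Hm (iterZ f g k a) (iterZ f g k x) (iterZ f g k b)).
      pose proof (ms_tri _ _ Hm (iterZ f g k x) (iterZ f g k y) (iterZ f g k b)).
      pose proof (ms_sym _ _ Hm (iterZ f g k y) (iterZ f g k b)).
      unfold gam in *. lra.
Qed.

Theorem proposition3p2 (X : Type) (d : X -> X -> R) (f g : X -> X) :
  metric_space X d ->
  m_compact d ->
  homeomorphism_with_inverse d f g ->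
  expansive d f g ->
  shadowing_property d f g ->
  L_shadowing_property d f g.
Proof.
  intros Hm Hc Hh [c [Hc0 Hexp]] Hsh eps Heps.
  pose proof Hh as [Hgf [Hfg _]].
  assert (He1 : 0 < Rmin eps (c/2)) by (apply Rmin_pos; lra).
  destruct (Hsh _ He1) as [delta [Hdel Hsh1]].
  exists delta. split; auto. intros xs Hpo Hlim.
  destruct (Hsh1 xs Hpo) as [z Hz]. exists z.
  assert (Hzc : forall k, d (iterZ f g k z) (xs k) < c/2).
  { intro k. specialize (Hz k). pose proof (Rmin_r eps (c/2)). lra. }
  split.
  - intro k. specialize (Hz k). pose proof (Rmin_l eps (c/2)). lra.
  - intros eta Heta.
    destruct (UE X d f g c Hm Hc Hh Hexp (eta/2) ltac:(lra)) as [M HM].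
    assert (He2 : 0 < Rmin (eta/2) (c/2)) by (apply Rmin_pos; lra).
    destruct (Hsh _ He2) as [d2 [Hd2 Hsh2]].
    pose proof (Rmin_l (eta/2) (c/2)). pose proof (Rmin_r (eta/2) (c/2)).
    destruct (Hlim d2 Hd2) as [N0 HN0].
    set (N := Z.max N0 0).
    assert (Hfw : forall j, (N + Z.of_nat M <= j)%Z -> d (iterZ f g j z) (xs j) < eta).
    { set (ys := fun j => if Z_le_dec N j then xs j else iterZ f g (j - N) (xs N)).
      destruct (Hsh2 ys) as [w Hw].
      - intro j. unfold ys. destruct (Z_le_dec N j), (Z_le_dec N (j+1)).
        + apply HN0. lia.
        + lia.
        + rewrite (fk_S f g Hgf Hfg).
          replace (j - N + 1)%Z with 0%Z by lia. simpl.
          replace (j + 1)%Z with N by lia. rewrite (dxx d Hm). exact Hd2.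
        + rewrite (fk_S f g Hgf Hfg).
          replace (j - N + 1)%Z with (j + 1 - N)%Z by lia. rewrite (dxx d Hm). exact Hd2.
      - assert (key : forall j, (N <= j)%Z -> d (iterZ f g j z) (iterZ f g j w) <= c).
        { intros j Hj. specialize (Hw j). specialize (Hzc j). unfold ys in Hw.
          destruct (Z_le_dec N j); [|lia].
          pose proof (ms_tri _ _ Hm (iterZ f g j z) (xs j) (iterZ f g j w)).
          pose proof (ms_sym _ _ Hm (xs j) (iterZ f g j w)). lra. }
        intros j Hj.
        assert (Hzw : d (iterZ f g j z) (iterZ f g j w) < eta/2).
        { apply HM. intros i Hi. rewrite !(fk_add f g Hgf Hfg). apply key. lia. }
        specialize (Hw j). unfold ys in Hw. destruct (Z_le_dec N j); [|lia].
        pose proof (ms_tri _ _ Hm (iterZ f g j z) (iterZ f g j w) (xs j)). lra. }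
    assert (Hbw : forall j, (j <= - (N + Z.of_nat M))%Z -> d (iterZ f g j z) (xs j) < eta).
    { set (ys := fun j => if Z_le_dec j (- N) then xs j else iterZ f g (j + N) (xs (- N)%Z)).
      destruct (Hsh2 ys) as [w Hw].
      - intro j. unfold ys. destruct (Z_le_dec j (- N)), (Z_le_dec (j+1) (- N)).
        + apply HN0. lia.
        + replace j with (- N)%Z by lia.
          replace (- N + 1 + N)%Z with 1%Z by lia. simpl.
          rewrite (dxx d Hm). exact Hd2.
        + lia.
        + rewrite (fk_S f g Hgf Hfg).
          replace (j + N + 1)%Z with (j + 1 + N)%Z by lia. rewrite (dxx d Hm). exact Hd2.
      - assert (key : forall j, (j <= - N)%Z -> d (iterZ f g j z) (iterZ f g j w) <= c).
        { intros j Hj. specialize (Hw j). specialize (Hzc j). unfold ys in Hw.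
          destruct (Z_le_dec j (- N)); [|lia].
          pose proof (ms_tri _ _ Hm (iterZ f g j z) (xs j) (iterZ f g j w)).
          pose proof (ms_sym _ _ Hm (xs j) (iterZ f g j w)). lra. }
        intros j Hj.
        assert (Hzw : d (iterZ f g j z) (iterZ f g j w) < eta/2).
        { apply HM. intros i Hi. rewrite !(fk_add f g Hgf Hfg). apply key. lia. }
        specialize (Hw j). unfold ys in Hw. destruct (Z_le_dec j (- N)); [|lia].
        pose proof (ms_tri _ _ Hm (iterZ f g j z) (iterZ f g j w) (xs j)). lra. }
    exists (N + Z.of_nat M)%Z. intros k Hk.
    destruct (Z_le_dec 0 k).
    + apply Hfw. lia.
    + apply Hbw. lia.
Qed.
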